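(* The PIR capacity of the complete graph $K_N$ on $N$ vertices satisfies $\mathscr{C}(K_N)\le \frac{2}{N+1}$.
   Context: Graph-based PIR model (non-colluding servers, 2-replication): vertices are servers, edges are files, each file stored on the two endpoints of its edge (for $K_N$, every pair of servers shares exactly one file); files are independent, each uniform on $\mathbb{F}_2^L$. A user wants $W_\theta$, $\theta$ uniform on the file indices and independent of the files; it sends queries $Q_1,\dots,Q_N$ (independent of the files) to the servers; server $i$ answers $A_i$, a deterministic function of $Q_i$ and the files on it. Reliability: $W_\theta$ is determined by all answers and queries. Privacy: $H(\theta\mid Q_i,W_{S_i})=H(\theta)$ for every $i$, $W_{S_i}$ being the files on server $i$. The rate is $L/\sum_i H(A_i)$; the PIR capacity is the supremum of rates over all schemes and file lengths $L$. *)

(* Defs.v *)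
From Stdlib Require Import Reals.
From HB Require Import structures.
From mathcomp Require Import all_boot all_order all_algebra.
From mathcomp Require Import Rstruct.

Set Implicit Arguments.
Unset Strict Implicit.
Unset Printing Implicit Defensive.

Import Order.TTheory GRing.Theory Num.Theory.

(* Edges of K_N = files: unordered pairs {a,b} of distinct servers, encoded a < b. *)
Definition edgeK (N : nat) : finType := {p : 'I_N * 'I_N | (p.1 < p.2)%N}.

(* Server i stores file e iff i is an endpoint of e. *)
Definition incident (N : nat) (i : 'I_N) (e : edgeK N) : bool :=
  ((sval e).1 == i) || ((sval e).2 == i).

Definition server_files (N : nat) (i : 'I_N) : finType := {e : edgeK N | incident i e}.

Local Open Scope ring_scope.

Definition is_prob (Omega : finType) (P : Omega -> R) : Prop :=
  (forall w, 0 <= P w) /\ \sum_(w : Omega) P w = 1.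

Definition Pr (Omega : finType) (P : Omega -> R) (E : pred Omega) : R :=
  \sum_(w : Omega | E w) P w.

Definition log2 (x : R) : R := ln x / ln 2.

Definition entropy (Omega : finType) (P : Omega -> R) (T : finType) (X : Omega -> T) : R :=
  - \sum_(t : T) Pr P (fun w => X w == t) * log2 (Pr P (fun w => X w == t)).

Definition cond_entropy (Omega : finType) (P : Omega -> R) (T U : finType)
  (X : Omega -> T) (Y : Omega -> U) : R :=
  entropy P (fun w => (X w, Y w)) - entropy P Y.

Definition files_on (N L : nat) (Omega : finType)
  (W : edgeK N -> Omega -> 'rV['F_2]_L) (i : 'I_N) (w : Omega)
  : {ffun server_files i -> 'rV['F_2]_L} :=
  [ffun e => W (sval e) w].

Definition all_files (N L : nat) (Omega : finType)
  (W : edgeK N -> Omega -> 'rV['F_2]_L) (w : Omega) : {ffun edgeK N -> 'rV['F_2]_L} :=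
  [ffun e => W e w].

Definition answer (N L : nat) (Omega : finType)
  (Qt : 'I_N -> finType) (Q : forall i, Omega -> Qt i)
  (At : 'I_N -> finType)
  (ans : forall i, Qt i -> {ffun server_files i -> 'rV['F_2]_L} -> At i)
  (W : edgeK N -> Omega -> 'rV['F_2]_L) (i : 'I_N) (w : Omega) : At i :=
  ans i (Q i w) (files_on W i w).

Definition KN_PIR_scheme (N L : nat) (Omega : finType) (P : Omega -> R)
  (theta : Omega -> edgeK N)
  (Qt : 'I_N -> finType) (Q : forall i, Omega -> Qt i)
  (At : 'I_N -> finType)
  (ans : forall i, Qt i -> {ffun server_files i -> 'rV['F_2]_L} -> At i)
  (W : edgeK N -> Omega -> 'rV['F_2]_L) : Prop :=
  is_prob P /\
  [/\ (* files independent, each uniform on F_2^L *)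
      (forall f : {ffun edgeK N -> 'rV['F_2]_L},
         Pr P (fun w => all_files W w == f) = ((2 ^ (L * #|edgeK N|))%N%:R)^-1),
      (forall t : edgeK N, Pr P (fun w => theta w == t) = (#|edgeK N|%:R)^-1),
      (forall (t : edgeK N) (q : forall i, Qt i) (f : {ffun edgeK N -> 'rV['F_2]_L}),
         Pr P (fun w => [&& theta w == t, [forall i, Q i w == q i] & all_files W w == f])
         = Pr P (fun w => (theta w == t) && [forall i, Q i w == q i])
           * Pr P (fun w => all_files W w == f)),
      (exists dec : (forall i, Qt i) -> (forall i, At i) -> 'rV['F_2]_L,
         forall w, 0 < P w ->
           dec (fun i => Q i w) (fun i => answer Q ans W i w) = W (theta w) w)
    &
      (forall i : 'I_N,
         cond_entropy P theta (fun w => (Q i w, files_on W i w)) = entropy P theta)].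

Definition PIR_rate (N L : nat) (Omega : finType) (P : Omega -> R)
  (Qt : 'I_N -> finType) (Q : forall i, Omega -> Qt i)
  (At : 'I_N -> finType)
  (ans : forall i, Qt i -> {ffun server_files i -> 'rV['F_2]_L} -> At i)
  (W : edgeK N -> Omega -> 'rV['F_2]_L) : R :=
  L%:R / \sum_(i < N) entropy P (answer Q ans W i).

(* Main.v *)
Require Import Defs.
From Stdlib Require Import Reals.
From HB Require Import structures.
From mathcomp Require Import all_boot all_order all_algebra.
From mathcomp Require Import Rstruct.
From mathcomp Require Import ring lra.
Set Implicit Arguments. Unset Strict Implicit. Unset Printing Implicit Defensive.
Import Order.TTheory GRing.Theory Num.Theory.
Local Open Scope ring_scope.

Lemma ln2_gt0 : 0 < ln 2.
Proof.
apply/RltP; apply: Rlt_trans (ln_lt_2); apply: Rinv_0_lt_compat; apply: Rlt_0_2.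
Qed.

Lemma ln_le' (x y : R) : 0 < x -> x <= y -> ln x <= ln y.
Proof.
move=> hx hxy; case: (x =P y) => [->//|neq].
have lt : x < y by rewrite lt_neqAle hxy andbT; apply/eqP.
apply/RleP; apply: Rlt_le; apply: ln_increasing; exact/RltP.
Qed.

Lemma ln_le_sub1 (u : R) : 0 < u -> ln u <= u - 1.
Proof.
move=> hu; have /RleP h := exp_ineq1_le (ln u).
rewrite exp_ln in h; last exact/RltP.
have h1 : 1 + ln u <= u := h. clear h. lra.
Qed.

Lemma ln_eq_sub1 (u : R) : 0 < u -> ln u = u - 1 -> u = 1.
Proof.
move=> hu he; case: (u =P 1) => // neq.
have h0 : ln u <> 0%R by apply: ln_neq_0 => //; exact/RltP.
have /RltP h := exp_ineq1 (ln u) h0.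
rewrite exp_ln in h; last exact/RltP.
have h1 : 1 + ln u < u := h. clear h. lra.
Qed.

Lemma ln_le0 (x : R) : 0 < x -> x <= 1 -> ln x <= 0.
Proof. move=> h1 h2; have := ln_le' h1 h2; rewrite ln_1; exact. Qed.

Lemma log2E (x : R) : log2 x = ln x / ln 2. Proof. by []. Qed.

Lemma sum_pair (I J : finType) (G : I * J -> R) :
  \sum_p G p = \sum_i \sum_j G (i, j).
Proof. by rewrite pair_bigA; apply: eq_bigr => -[i j]. Qed.

Section Ent.
Variables (Omega : finType) (P : Omega -> R).
Hypothesis HP : is_prob P.

Lemma P_ge0 w : 0 <= P w. Proof. by case: HP. Qed.
Lemma P_sum1 : \sum_w P w = 1. Proof. by case: HP. Qed.

Lemma Pr_ge0 (E : pred Omega) : 0 <= Pr P E.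
Proof. by apply: sumr_ge0 => w _; exact: P_ge0. Qed.

Lemma Pr_sub (E1 E2 : pred Omega) : (forall w, E1 w -> E2 w) -> Pr P E1 <= Pr P E2.
Proof.
move=> h; rewrite /Pr [X in _ <= X]big_mkcond [X in X <= _]big_mkcond /=.
apply: ler_sum => w _; case: ifP => e1; first by rewrite (h _ e1).
by case: ifP => _ //; exact: P_ge0.
Qed.

Lemma Pr_le1 (E : pred Omega) : Pr P E <= 1.
Proof. rewrite -P_sum1; exact: (@Pr_sub E xpredT). Qed.

Lemma Pr_pt (E : pred Omega) w : E w -> P w <= Pr P E.
Proof.
move=> hw; rewrite /Pr (bigD1 w) //= lerDl; apply: sumr_ge0 => v _; exact: P_ge0.
Qed.

Lemma Pr_supp (T : finType) (V : Omega -> T) w : P w != 0 -> 0 < Pr P (fun v => V v == V w).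
Proof.
move=> hw; apply: (@lt_le_trans _ _ (P w)); last by apply: Pr_pt => /=.
by rewrite lt_neqAle eq_sym hw P_ge0.
Qed.

Lemma sum_by_val (T : finType) (V : Omega -> T) (F : Omega -> R) :
  \sum_w F w = \sum_t \sum_(w | V w == t) F w.
Proof. by rewrite (partition_big V xpredT). Qed.

Lemma sum_val (T : finType) (V : Omega -> T) (F : T -> R) :
  \sum_w P w * F (V w) = \sum_t Pr P (fun w => V w == t) * F t.
Proof.
rewrite (sum_by_val V); apply: eq_bigr => t _; rewrite /Pr big_distrl /=.
by apply: eq_bigr => w /eqP ->.
Qed.

Lemma Pr_tot (T : finType) (V : Omega -> T) : \sum_t Pr P (fun w => V w == t) = 1.
Proof. by rewrite -P_sum1 (sum_by_val V). Qed.

Lemma Pr_marg1 (T U : finType) (X : Omega -> T) (Y : Omega -> U) y :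
  \sum_x Pr P (fun w => (X w, Y w) == (x, y)) = Pr P (fun w => Y w == y).
Proof.
rewrite [RHS]/Pr (partition_big X xpredT) //=; apply: eq_bigr => x _.
by rewrite /Pr; apply: eq_bigl => w; rewrite xpair_eqE andbC.
Qed.

Lemma Pr_marg2 (T U : finType) (X : Omega -> T) (Y : Omega -> U) x :
  \sum_y Pr P (fun w => (X w, Y w) == (x, y)) = Pr P (fun w => X w == x).
Proof.
by rewrite [RHS]/Pr (partition_big Y xpredT) //=.
Qed.

Definition Lsum (T : finType) (X : Omega -> T) :=
  \sum_w P w * ln (Pr P (fun v => X v == X w)).

Lemma entropy_L (T : finType) (X : Omega -> T) : entropy P X = - Lsum X / ln 2.
Proof.
rewrite /entropy /Lsum mulNr; congr (- _).
rewrite big_distrl [RHS](sum_by_val X); apply: eq_bigr => t _.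
rewrite {1}/Pr big_distrl; apply: eq_bigr => w /eqP ->.
by rewrite log2E; exact: mulrA.
Qed.


Lemma ln_ratio (a b c d : R) : 0 < a -> 0 < b -> 0 < c -> 0 < d ->
  ln a + ln b - ln c - ln d = ln (a * b / (c * d)).
Proof.
move=> ha hb hc hd.
have hab : 0 < a * b by rewrite mulr_gt0.
have hcd : 0 < c * d by rewrite mulr_gt0.
have hi : 0 < (c * d)^-1 by rewrite invr_gt0.
rewrite ln_mult; [|exact/RltP|exact/RltP].
rewrite ln_mult; [|exact/RltP|exact/RltP].
rewrite ln_Rinv; [|exact/RltP].
rewrite ln_mult; [|exact/RltP|exact/RltP].
apply: (@eq_trans _ _ (ln a + ln b - (ln c + ln d))); [lra|by []].
Qed.

Lemma Lsum_submod (TX TY TZ : finType) (X : Omega -> TX) (Y : Omega -> TY) (Z : Omega -> TZ) :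
  Lsum (fun w => (X w, Z w)) + Lsum (fun w => (Y w, Z w)) <=
  Lsum (fun w => (X w, Y w, Z w)) + Lsum Z.
Proof.
pose pV t := Pr P (fun v => (X v, Y v, Z v) == t).
pose pXZ (t : TX * TY * TZ) := Pr P (fun v => (X v, Z v) == (t.1.1, t.2)).
pose pYZ (t : TX * TY * TZ) := Pr P (fun v => (Y v, Z v) == (t.1.2, t.2)).
pose pZ (t : TX * TY * TZ) := Pr P (fun v => Z v == t.2).
pose F t := pXZ t * pYZ t / (pV t * pZ t).
have key : \sum_w P w * F (X w, Y w, Z w) <= 1.
  rewrite (sum_val (fun w => (X w, Y w, Z w)) F).
  apply: (@le_trans _ _ (\sum_t pXZ t * pYZ t / pZ t)).
    apply: ler_sum => t _; rewrite /F.
    have hn : 0 <= pXZ t * pYZ t / pZ t.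
      by rewrite !mulr_ge0 ?invr_ge0 ?Pr_ge0.
    rewrite -/(pV t).
    case: (eqVneq (pV t) 0) => [h0|hn0]; first by rewrite h0 mul0r.
    rewrite -/(pZ t) -/(pXZ t) -/(pYZ t).
    case: (eqVneq (pZ t) 0) => [z0|zn0]; first by rewrite z0 !mulr0 invr0 !mulr0.
    rewrite le_eqVlt; apply/orP; left; apply/eqP; field.
    by rewrite hn0 zn0.
  rewrite sum_pair sum_pair.
  under eq_bigr do rewrite exchange_big.
  rewrite exchange_big /=.
  apply: (@le_trans _ _ (\sum_z Pr P (fun v => Z v == z))); last by rewrite Pr_tot.
  apply: ler_sum => z _.
  rewrite /pXZ /pYZ /pZ /=.
  under eq_bigr do rewrite -big_distrl -big_distrr /=.
  rewrite -big_distrl -big_distrl /= Pr_marg1 Pr_marg1.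
  case: (eqVneq (Pr P (fun v => Z v == z)) 0) => [->|hz]; first by rewrite !mul0r.
  by rewrite mulfK.
rewrite -subr_le0.
have -> : Lsum (fun w => (X w, Z w)) + Lsum (fun w => (Y w, Z w)) -
  (Lsum (fun w => (X w, Y w, Z w)) + Lsum Z) =
  \sum_w P w * (ln (Pr P (fun v => (X v, Z v) == (X w, Z w))) +
     ln (Pr P (fun v => (Y v, Z v) == (Y w, Z w))) -
     ln (Pr P (fun v => (X v, Y v, Z v) == (X w, Y w, Z w))) -
     ln (Pr P (fun v => Z v == Z w))).
  under [RHS]eq_bigr do rewrite !mulrDr !mulrN.
  rewrite !sumrB !big_split /= /Lsum; lra.
apply: (@le_trans _ _ (\sum_w P w * (F (X w, Y w, Z w) - 1))).
  apply: ler_sum => w _.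
  case: (eqVneq (P w) 0) => [->|hw]; first by rewrite !mul0r.
  apply: ler_wpM2l; first exact: P_ge0.
  have h1 := Pr_supp (fun v => (X v, Z v)) hw.
  have h2 := Pr_supp (fun v => (Y v, Z v)) hw.
  have h3 := Pr_supp (fun v => (X v, Y v, Z v)) hw.
  have h4 := Pr_supp Z hw.
  rewrite ln_ratio //; apply: ln_le_sub1.
  by rewrite /F /pXZ /pYZ /pV /pZ /= divr_gt0 // mulr_gt0.
under eq_bigr do rewrite mulrBr mulr1.
by rewrite sumrB P_sum1 subr_le0.
Qed.


Lemma negdiv_le (a b d e : R) : d + e <= a + b -> -a / ln 2 + -b / ln 2 <= -d / ln 2 + -e / ln 2.
Proof.
move=> h; rewrite -!mulrDl ler_pM2r ?invr_gt0 ?ln2_gt0 //; lra.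
Qed.

Lemma ent_submod (TX TY TZ : finType) (X : Omega -> TX) (Y : Omega -> TY) (Z : Omega -> TZ) :
  entropy P (fun w => (X w, Y w, Z w)) + entropy P Z <=
  entropy P (fun w => (X w, Z w)) + entropy P (fun w => (Y w, Z w)).
Proof. rewrite !entropy_L; apply: negdiv_le; exact: Lsum_submod. Qed.

Lemma ent_mono (T U : finType) (X : Omega -> T) (Y : Omega -> U) :
  entropy P X <= entropy P (fun w => (X w, Y w)).
Proof.
rewrite !entropy_L ler_pM2r ?invr_gt0 ?ln2_gt0 // lerN2.
apply: ler_sum => w _.
case: (eqVneq (P w) 0) => [->|hw]; first by rewrite !mul0r.
apply: ler_wpM2l; first exact: P_ge0.
apply: ln_le'; first exact: (Pr_supp (fun v => (X v, Y v)) hw).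
by apply: Pr_sub => v /=; rewrite xpair_eqE => /andP [].
Qed.

Lemma ent_inv (T U : finType) (X : Omega -> T) (Y : Omega -> U) :
  (forall w w', P w != 0 -> P w' != 0 -> (X w == X w') = (Y w == Y w')) ->
  entropy P X = entropy P Y.
Proof.
move=> h; rewrite !entropy_L /Lsum; congr (- _ / _); apply: eq_bigr => w _.
case: (eqVneq (P w) 0) => [->|hw]; first by rewrite !mul0r.
congr (_ * ln _); rewrite /Pr big_mkcond [RHS]big_mkcond /=; apply: eq_bigr => v _.
case: (eqVneq (P v) 0) => [->|hv]; first by rewrite !if_same.
by rewrite (h v w hv hw).
Qed.

Lemma ent_eqf (T U : finType) (X : Omega -> T) (Y : Omega -> U) (f : U -> T) (g : T -> U) :
  (forall w, P w != 0 -> X w = f (Y w)) -> (forall w, P w != 0 -> Y w = g (X w)) ->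
  entropy P X = entropy P Y.
Proof.
move=> hf hg; apply: ent_inv => w w' hw hw'.
apply/eqP/eqP => e.
  by rewrite (hg w hw) (hg w' hw') e.
by rewrite (hf w hw) (hf w' hw') e.
Qed.

Lemma ent_tt : entropy P (fun _ => tt) = 0.
Proof.
rewrite entropy_L /Lsum.
have -> : Pr P (fun _ : Omega => tt == tt) = 1 by rewrite -P_sum1.
by rewrite ln_1 big1 ?oppr0 ?mul0r // => w _; rewrite mulr0.
Qed.

Lemma ent_subadd (T U : finType) (X : Omega -> T) (Y : Omega -> U) :
  entropy P (fun w => (X w, Y w)) <= entropy P X + entropy P Y.
Proof.
have := ent_submod X Y (fun _ => tt).
rewrite ent_tt addr0.
rewrite (@ent_eqf _ _ (fun w => (X w, Y w, tt)) (fun w => (X w, Y w)) (fun p => (p, tt)) fst) //.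
rewrite (@ent_eqf _ _ (fun w => (X w, tt)) X (fun p => (p, tt)) fst) //.
by rewrite (@ent_eqf _ _ (fun w => (Y w, tt)) Y (fun p => (p, tt)) fst).
Qed.

Lemma cond_mono (T U V : finType) (X : Omega -> T) (Y : Omega -> U) (Z : Omega -> V) (g : U -> V) :
  (forall w, Z w = g (Y w)) ->
  entropy P (fun w => (X w, Y w)) - entropy P Y <= entropy P (fun w => (X w, Z w)) - entropy P Z.
Proof.
move=> hg; have := ent_submod X Y Z.
rewrite (@ent_eqf _ _ (fun w => (X w, Y w, Z w)) (fun w => (X w, Y w))
  (fun p => (p.1, p.2, g p.2)) (fun q => q.1)) /=; last by [].
  rewrite (@ent_eqf _ _ (fun w => (Y w, Z w)) Y (fun p => (p, g p)) fst) /=; last by [].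
    lra.
  by move=> w _; rewrite hg.
by move=> w _; rewrite hg.
Qed.

Lemma cond_eqf (T U V : finType) (X : Omega -> T) (Y : Omega -> U) (Y' : Omega -> V)
  (f : U -> V) (g : V -> U) :
  (forall w, Y' w = f (Y w)) -> (forall w, Y w = g (Y' w)) ->
  entropy P (fun w => (X w, Y w)) - entropy P Y = entropy P (fun w => (X w, Y' w)) - entropy P Y'.
Proof.
move=> hf hg.
rewrite (@ent_eqf _ _ (fun w => (X w, Y w)) (fun w => (X w, Y' w))
  (fun p => (p.1, g p.2)) (fun p => (p.1, f p.2))); first last.
- by move=> w _; rewrite hf.
- by move=> w _; rewrite -hg.
rewrite (@ent_eqf _ _ Y Y' g f) //.
all: move=> w _; by [apply: hg | apply: hf].
Qed.

Lemma ent_indep (T U : finType) (X : Omega -> T) (Y : Omega -> U) :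
  (forall x y, Pr P (fun w => (X w, Y w) == (x, y)) =
     Pr P (fun w => X w == x) * Pr P (fun w => Y w == y)) ->
  entropy P (fun w => (X w, Y w)) = entropy P X + entropy P Y.
Proof.
move=> h; rewrite !entropy_L -mulrDl -opprD; congr (- _ / _).
rewrite /Lsum -big_split /=; apply: eq_bigr => w _.
case: (eqVneq (P w) 0) => [->|hw]; first by rewrite !mul0r addr0.
have h1 := Pr_supp X hw; have h2 := Pr_supp Y hw.
by rewrite h ln_mult ?mulrDr //; apply/RltP.
Qed.

Lemma markov (TA TU TY TZ : finType) (A : Omega -> TA) (U : Omega -> TU) (Y : Omega -> TY)
  (Z : Omega -> TZ) (g : TY -> TZ) (phi : TZ -> TU -> TA) :
  (forall w, Z w = g (Y w)) -> (forall w, A w = phi (Z w) (U w)) ->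
  (forall u y, Pr P (fun w => (U w, Y w) == (u, y)) =
     Pr P (fun w => U w == u) * Pr P (fun w => Y w == y)) ->
  entropy P (fun w => (A w, Z w)) - entropy P Z <= entropy P (fun w => (A w, Y w)) - entropy P Y.
Proof.
move=> hg hphi hind.
have s := ent_submod U Y (fun w => (A w, Z w)).
rewrite (@ent_eqf _ _ (fun w => (U w, Y w, (A w, Z w))) (fun w => (U w, Y w))
  (fun p => (p.1, p.2, (phi (g p.2) p.1, g p.2))) (fun q => q.1)) /= in s; first last.
- by [].
- by move=> w _; rewrite hphi hg.
rewrite ent_indep // in s.
rewrite (@ent_eqf _ _ (fun w => (U w, (A w, Z w))) (fun w => (U w, Z w))
  (fun p => (p.1, (phi p.2 p.1, p.2))) (fun q => (q.1, q.2.2))) /= in s; first last.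
- by [].
- by move=> w _; rewrite hphi.
rewrite (@ent_eqf _ _ (fun w => (Y w, (A w, Z w))) (fun w => (A w, Y w))
  (fun p => (p.2, (p.1, g p.2))) (fun q => (q.2.1, q.1))) /= in s; first last.
- by [].
- by move=> w _; rewrite hg.
have := ent_subadd U Z.
lra.
Qed.

Lemma ent_unif (T : finType) (X : Omega -> T) :
  (0 < #|T|)%N -> (forall t, Pr P (fun w => X w == t) = (#|T|%:R)^-1) ->
  entropy P X = log2 #|T|%:R.
Proof.
move=> hT h; rewrite /entropy.
under eq_bigr do rewrite h.
have hn : 0 < #|T|%:R :> R by rewrite ltr0n.
set c := (#|T|%:R)^-1.
rewrite sumr_const (_ : #|_| = #|T|); last by apply: eq_card.
rewrite -[_ *+ #|T|]mulr_natl mulrA /c mulfV ?mul1r; last by rewrite gt_eqF.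
rewrite !log2E ln_Rinv; last exact/RltP.
by apply: (@eq_trans _ _ (- ((- ln #|T|%:R) / ln 2))); [| rewrite mulNr opprK].
Qed.


Lemma ent_ge0 (T : finType) (X : Omega -> T) : 0 <= entropy P X.
Proof.
rewrite entropy_L mulr_ge0 //; last by rewrite invr_ge0 ltW // ln2_gt0.
rewrite oppr_ge0; apply: sumr_le0 => w _.
case: (eqVneq (P w) 0) => [->|hw]; first by rewrite mul0r.
have hp : 0 < P w by rewrite lt_neqAle eq_sym hw P_ge0.
rewrite pmulr_rle0 //; apply: ln_le0; first exact: Pr_supp.
exact: Pr_le1.
Qed.

Lemma ln_ratio3 (a b c : R) : 0 < a -> 0 < b -> 0 < c ->
  ln (a * b / c) = ln a + ln b - ln c.
Proof.
move=> ha hb hc.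
have hab : 0 < a * b by rewrite mulr_gt0.
have hi : 0 < c^-1 by rewrite invr_gt0.
rewrite ln_mult; [|exact/RltP|exact/RltP].
rewrite ln_Rinv; [|exact/RltP].
rewrite ln_mult; [|exact/RltP|exact/RltP].
by [].
Qed.

Lemma gibbs (T U : finType) (X : Omega -> T) (Y : Omega -> U) :
  entropy P (fun w => (X w, Y w)) - entropy P Y = entropy P X ->
  forall x y, Pr P (fun w => (X w, Y w) == (x, y)) =
    Pr P (fun w => X w == x) * Pr P (fun w => Y w == y).
Proof.
move=> hH.
have c0 : ln 2 != 0 by rewrite gt_eqF // ln2_gt0.
have hL : Lsum (fun w => (X w, Y w)) = Lsum X + Lsum Y.
  move: hH; rewrite !entropy_L => /(congr1 (fun z => z * ln 2)) /=.
  rewrite mulrBl !divfK //; lra.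
pose pXY (t : T * U) := Pr P (fun w => (X w, Y w) == t).
pose G (t : T * U) := Pr P (fun w => X w == t.1) * Pr P (fun w => Y w == t.2).
pose u w := G (X w, Y w) / pXY (X w, Y w).
pose K := \sum_t (if pXY t == 0 then 0 else G t).
have G_ge0 t : 0 <= G t by rewrite mulr_ge0 ?Pr_ge0.
have hK : \sum_w P w * u w = K.
  rewrite (sum_val (fun w => (X w, Y w)) (fun t => G t / pXY t)) /K.
  apply: eq_bigr => t _; rewrite -/(pXY t).
  case: eqVneq => [->|h]; first by rewrite mul0r.
  by rewrite mulrC divfK.
have hG : \sum_t G t = 1.
  rewrite sum_pair /G /=.
  under eq_bigr do rewrite -big_distrr /= Pr_tot mulr1.
  exact: Pr_tot.
have hK1 : K <= 1.
  rewrite -hG; apply: ler_sum => t _; case: ifP => // _.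
have u_pos w : P w != 0 -> 0 < u w.
  move=> hw; rewrite /u /G /pXY /= divr_gt0 ?mulr_gt0 //.
  - exact: (Pr_supp X hw).
  - exact: (Pr_supp Y hw).
  - exact: (Pr_supp (fun v => (X v, Y v)) hw).
have hlnu : \sum_w P w * ln (u w) = Lsum X + Lsum Y - Lsum (fun w => (X w, Y w)).
  rewrite /Lsum -big_split -sumrB /=; apply: eq_bigr => w _.
  case: (eqVneq (P w) 0) => [->|hw]; first by rewrite !mul0r subr0 addr0.
  rewrite /u /G /pXY /= ln_ratio3.
  - by rewrite mulrBr mulrDr.
  - exact: (Pr_supp X hw).
  - exact: (Pr_supp Y hw).
  - exact: (Pr_supp (fun v => (X v, Y v)) hw).
pose d w := P w * (u w - 1 - ln (u w)).
have d_ge0 w : 0 <= d w.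
  rewrite /d; case: (eqVneq (P w) 0) => [->|hw]; first by rewrite mul0r.
  rewrite mulr_ge0 ?P_ge0 // subr_ge0; exact: ln_le_sub1 (u_pos w hw).
have sum_d : \sum_w d w = K - 1.
  rewrite /d; under eq_bigr do rewrite mulrBr mulrBr mulr1.
  rewrite !sumrB hK P_sum1 hlnu hL; lra.
have sum_d0 : \sum_w d w = 0.
  apply/eqP; rewrite eq_le; apply/andP; split; first by rewrite sum_d; lra.
  by apply: sumr_ge0 => w _; exact: d_ge0.
have K1 : K = 1 by move: sum_d; rewrite sum_d0; lra.
have d0 := psumr_eq0P (fun w _ => d_ge0 w) sum_d0.
have ptw w : P w != 0 -> pXY (X w, Y w) = G (X w, Y w).
  move=> hw; have := d0 w isT; rewrite /d => /eqP; rewrite mulf_eq0 (negbTE hw) /=.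
  move=> /eqP h; have h1 : ln (u w) = u w - 1 by lra.
  have := ln_eq_sub1 (u_pos w hw) h1; rewrite /u => /eqP.
  have hp : pXY (X w, Y w) != 0.
    by rewrite gt_eqF //; exact: (Pr_supp (fun v => (X v, Y v)) hw).
  by rewrite -(inj_eq (mulIf hp)) divfK // mul1r => /eqP.
move=> x y; change (pXY (x, y) = G (x, y)).
case: (eqVneq (pXY (x, y)) 0) => [h0|hn0].
  have hs : \sum_t (if pXY t == 0 then G t else 0) = 0.
    have : \sum_t G t = K + \sum_t (if pXY t == 0 then G t else 0).
      rewrite /K -big_split /=; apply: eq_bigr => t _; case: ifP => _.
        by rewrite add0r. by rewrite addr0.
    rewrite hG K1; lra.
  have hnn : forall t, true -> 0 <= (if pXY t == 0 then G t else 0).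
    by move=> t _; case: ifP.
  have := psumr_eq0P (i := (x, y)) hnn hs isT.
  by rewrite h0 eqxx => ->.
have [w /andP [hw /eqP hxy]] : exists w, (P w != 0) && ((X w, Y w) == (x, y)).
  case: (boolP [exists w, (P w != 0) && ((X w, Y w) == (x, y))]) => [/existsP //|].
  rewrite negb_exists => /forallP hall.
  move/eqP: hn0; case; rewrite /pXY /Pr big1 // => w hw'.
  by move: (hall w); rewrite hw' andbT negbK => /eqP.
by case: hxy => <- <-; exact: ptw.
Qed.

Lemma unif_indep (T U : finType) (V : Omega -> T) (Y : Omega -> U) (c : U -> R) :
  (forall v y, Pr P (fun w => (V w, Y w) == (v, y)) = c y) ->
  (forall v, Pr P (fun w => V w == v) = (#|T|%:R)^-1) /\
  (forall v y, Pr P (fun w => (V w, Y w) == (v, y)) =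
     Pr P (fun w => V w == v) * Pr P (fun w => Y w == y)).
Proof.
move=> h.
have hV v : Pr P (fun w => V w == v) = \sum_y c y.
  by rewrite -(Pr_marg2 V Y); apply: eq_bigr => y _; rewrite h.
have hY y : Pr P (fun w => Y w == y) = c y *+ #|T|.
  rewrite -(Pr_marg1 V Y); under eq_bigr do rewrite h.
  by rewrite sumr_const (_ : #|_| = #|T|) //; apply: eq_card.
have K1 : (\sum_y c y) *+ #|T| = 1.
  rewrite -(Pr_tot V); under [RHS]eq_bigr do rewrite hV.
  by rewrite sumr_const (_ : #|_| = #|T|) //; apply: eq_card.
have n0 : (#|T|%:R : R) != 0.
  by apply/eqP => h0; move: K1; rewrite -mulr_natr h0 mulr0 => /eqP; rewrite eq_sym oner_eq0.
have hs : \sum_y c y = (#|T|%:R)^-1.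
  apply: (mulIf n0); rewrite mulVf // mulr_natr; exact: K1.
split=> [v|v y]; first by rewrite hV hs.
by rewrite h hV hY hs -[c y *+ _]mulr_natr mulrCA mulVf // mulr1.
Qed.

End Ent.

Lemma ent_transfer (Omega : finType) (P1 P2 : Omega -> R) (T U : finType) (V : Omega -> T) (g : T -> U) :
  (forall t, Pr P1 (fun w => V w == t) = Pr P2 (fun w => V w == t)) ->
  entropy P1 (fun w => g (V w)) = entropy P2 (fun w => g (V w)).
Proof.
move=> h.
suff hu : forall (Q : Omega -> R) u, Pr Q (fun w => g (V w) == u) =
    \sum_t (if g t == u then Pr Q (fun w => V w == t) else 0).
  rewrite /entropy; congr (- _); apply: eq_bigr => u _; rewrite !hu.
  by under eq_bigr do rewrite h.
move=> Q u; rewrite /Pr (partition_big V xpredT) //=; apply: eq_bigr => t _.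
case: ifP => hg.
  apply: eq_bigl => w; case E: (V w == t); rewrite ?andbF ?andbT //.
  by move/eqP: E => ->; rewrite hg.
rewrite big_pred0 // => w; case E: (V w == t); rewrite ?andbF ?andbT //.
by move/eqP: E => ->; rewrite hg.
Qed.

From Stdlib Require Import FunctionalExtensionality.
From mathcomp Require Import zify.
Set Implicit Arguments. Unset Strict Implicit. Unset Printing Implicit Defensive.
Import Order.TTheory GRing.Theory Num.Theory.
Local Open Scope ring_scope.

Section Model.
Variables (N L : nat) (Omega : finType) (P : Omega -> R) (theta : Omega -> edgeK N)
  (Qt : 'I_N -> finType) (Q : forall i, Omega -> Qt i)
  (At : 'I_N -> finType)
  (ans : forall i, Qt i -> {ffun server_files i -> 'rV['F_2]_L} -> At i)
  (W : edgeK N -> Omega -> 'rV['F_2]_L).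
Hypothesis HN : (3 <= N)%N.
Hypothesis HS : KN_PIR_scheme P theta Q ans W.

Lemma HP : is_prob P. Proof. by case: HS. Qed.

Definition m := #|edgeK N|.
Definition M := (2 ^ (L * m))%N.

Lemma Hfiles (f : {ffun edgeK N -> 'rV['F_2]_L}) :
  Pr P (fun w => all_files W w == f) = (M%:R)^-1.
Proof. by case: HS => _ []. Qed.

Lemma Htheta t : Pr P (fun w => theta w == t) = (m%:R)^-1.
Proof. by case: HS => _ []. Qed.

Lemma Hind (t : edgeK N) (q : forall i, Qt i) (f : {ffun edgeK N -> 'rV['F_2]_L}) :
  Pr P (fun w => [&& theta w == t, [forall i, Q i w == q i] & all_files W w == f])
  = Pr P (fun w => (theta w == t) && [forall i, Q i w == q i])
    * Pr P (fun w => all_files W w == f).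
Proof. by case: HS => _ []. Qed.

Lemma Hrel : exists dec : (forall i, Qt i) -> (forall i, At i) -> 'rV['F_2]_L,
  forall w, 0 < P w -> dec (fun i => Q i w) (fun i => answer Q ans W i w) = W (theta w) w.
Proof. by case: HS => _ []. Qed.

Lemma Hpriv i : cond_entropy P theta (fun w => (Q i w, files_on W i w)) = entropy P theta.
Proof. by case: HS => _ []. Qed.

Lemma N1 : (1 < N)%N. Proof. by apply: leq_trans HN. Qed.
Lemma N0 : (0 < N)%N. Proof. by apply: leq_trans HN. Qed.

Definition e0 : edgeK N := exist _ (Ordinal N0, Ordinal N1) isT.

Lemma m_gt0 : (0 < m)%N. Proof. by apply/card_gt0P; exists e0. Qed.

Definition QQ (w : Omega) : {dffun forall i, Qt i} := [ffun i => Q i w].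
Definition AA (w : Omega) : {dffun forall i, At i} := [ffun i => answer Q ans W i w].
Definition Wz (D : pred (edgeK N)) (w : Omega) : {ffun edgeK N -> 'rV['F_2]_L} :=
  [ffun d => if D d then 0 else W d w].
Definition Ai i w := answer Q ans W i w.
Definition Zi i (d : edgeK N) w :=
  (Q i w, [ffun s : server_files i => if sval s == d then 0 else files_on W i w s]).
Definition Pe (e : edgeK N) (w : Omega) : R := if theta w == e then m%:R * P w else 0.


Lemma Pr_Pe e (E : pred Omega) : Pr (Pe e) E = m%:R * Pr P (fun w => (theta w == e) && E w).
Proof.
rewrite /Pr /Pe big_distrr /= [RHS]big_mkcond [LHS]big_mkcond /=; apply: eq_bigr => w _.
by case: (E w); case: (theta w == e); rewrite /= ?andbF ?andbT.
Qed.

Lemma Pe_prob e : is_prob (Pe e).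
Proof.
split.
  move=> w; rewrite /Pe; case: ifP => _ //; by rewrite mulr_ge0 ?ler0n ?(P_ge0 HP).
have -> : \sum_w Pe e w = Pr (Pe e) xpredT by [].
rewrite Pr_Pe (_ : Pr P _ = Pr P (fun w => theta w == e)); last by apply: eq_bigl => w; rewrite andbT.
by rewrite Htheta mulfV // pnatr_eq0 -lt0n m_gt0.
Qed.

Lemma Pe_supp e w : Pe e w != 0 -> (P w != 0) && (theta w == e).
Proof. rewrite /Pe; case: ifP => [he|]; last by rewrite eqxx. by rewrite andbT mulf_eq0 negb_or => /andP []. Qed.

Lemma ev_split d (v : 'rV['F_2]_L) (o : {ffun edgeK N -> 'rV['F_2]_L}) w : o d = 0 ->
  (W d w == v) && (Wz (pred1 d) w == o) = (all_files W w == [ffun x => if x == d then v else o x]).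
Proof.
move=> hod; apply/andP/eqP.
  case=> /eqP hv /eqP ho; apply/ffunP => x; rewrite !ffunE.
  case: (eqVneq x d) => [->|hx]; first by [].
  by rewrite -ho ffunE /= (negbTE hx).
move=> /ffunP hF; split; apply/eqP.
  by have := hF d; rewrite !ffunE eqxx.
apply/ffunP => x; rewrite ffunE /=; case: (eqVneq x d) => [->|hx]; first by rewrite hod.
by have := hF x; rewrite !ffunE (negbTE hx) => ->.
Qed.

Lemma QQ_eq w (q : {dffun forall i, Qt i}) : (QQ w == q) = [forall i, Q i w == q i].
Proof.
apply/eqP/forallP => [<- i|h]; first by rewrite ffunE.
by apply/ffunP => i; rewrite ffunE; exact/eqP.
Qed.

Lemma KI e d :
  (forall v, Pr (Pe e) (fun w => W d w == v) = (#|'rV['F_2]_L|%:R)^-1) /\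
  (forall v y, Pr (Pe e) (fun w => (W d w, (QQ w, Wz (pred1 d) w)) == (v, y)) =
     Pr (Pe e) (fun w => W d w == v) * Pr (Pe e) (fun w => (QQ w, Wz (pred1 d) w) == y)).
Proof.
apply: (unif_indep (Pe_prob e) (V := W d) (Y := fun w => (QQ w, Wz (pred1 d) w)) (c := fun y => if y.2 d == 0 then
   m%:R * (Pr P (fun w => (theta w == e) && [forall i, Q i w == y.1 i]) * (M%:R)^-1) else 0)).
move=> v [q o]; rewrite Pr_Pe /=.
case: (eqVneq (o d) 0) => [hod|hod].
  rewrite -(Hfiles [ffun x => if x == d then v else o x]) -(Hind e (fun i => q i)).
  congr (_ * _); apply: eq_bigl => w /=; rewrite !xpair_eqE -(ev_split _ _ hod) QQ_eq.
  case: (theta w == e); case: (W d w == v); case: [forall i, Q i w == q i];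
    by case: (Wz (pred1 d) w == o).
rewrite (_ : Pr P _ = 0) ?mulr0 //; rewrite /Pr big_pred0 // => w; rewrite !xpair_eqE.
case: (eqVneq (Wz (pred1 d) w) o) => [ho|]; last by rewrite !andbF.
by move: hod; rewrite -ho ffunE /= eqxx eqxx.
Qed.


Lemma PT i e (x : Qt i * {ffun server_files i -> 'rV['F_2]_L}) :
  Pr (Pe e) (fun w => (Q i w, files_on W i w) == x) = Pr P (fun w => (Q i w, files_on W i w) == x).
Proof.
have h := Hpriv i; rewrite /cond_entropy in h.
have g := gibbs HP h e x.
rewrite Pr_Pe.
rewrite (_ : Pr P (fun w => (theta w == e) && ((Q i w, files_on W i w) == x)) =
  Pr P (fun w => (theta w, (Q i w, files_on W i w)) == (e, x))); last first.
  by apply: eq_bigl => w; rewrite xpair_eqE.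
by rewrite g Htheta mulrA mulfV ?mul1r // pnatr_eq0 -lt0n m_gt0.
Qed.

Lemma ent_PT i e (U : finType) (g : Qt i * {ffun server_files i -> 'rV['F_2]_L} -> U) :
  entropy (Pe e) (fun w => g (Q i w, files_on W i w)) = entropy P (fun w => g (Q i w, files_on W i w)).
Proof. by apply: (ent_transfer (V := fun w => (Q i w, files_on W i w))) => t; exact: PT. Qed.

Lemma PT_A i e : entropy (Pe e) (Ai i) = entropy P (Ai i).
Proof.
pose g := fun x : Qt i * {ffun server_files i -> 'rV['F_2]_L} => ans x.1 x.2.
change (entropy (Pe e) (fun w => g (Q i w, files_on W i w)) = entropy P (fun w => g (Q i w, files_on W i w))).
exact: ent_PT.
Qed.

Lemma PT_AZ i d e : entropy (Pe e) (fun w => (Ai i w, Zi i d w)) = entropy P (fun w => (Ai i w, Zi i d w)).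
Proof.
pose g := fun x : Qt i * {ffun server_files i -> 'rV['F_2]_L} =>
  (ans x.1 x.2, (x.1, [ffun s : server_files i => if sval s == d then 0 else x.2 s])).
change (entropy (Pe e) (fun w => g (Q i w, files_on W i w)) = entropy P (fun w => g (Q i w, files_on W i w))).
exact: ent_PT.
Qed.

Lemma PT_Z i d e : entropy (Pe e) (Zi i d) = entropy P (Zi i d).
Proof.
pose g := fun x : Qt i * {ffun server_files i -> 'rV['F_2]_L} =>
  (x.1, [ffun s : server_files i => if sval s == d then 0 else x.2 s]).
change (entropy (Pe e) (fun w => g (Q i w, files_on W i w)) = entropy P (fun w => g (Q i w, files_on W i w))).
exact: ent_PT.
Qed.

Lemma ln_2pow n : ln ((2 ^ n)%N%:R) = n%:R * ln 2.
Proof.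
elim: n => [|n IH]; first by rewrite expn0 mul0r; exact: ln_1.
have h2 : 0 < 2%:R :> R by rewrite ltr0n.
have h3 : 0 < (2 ^ n)%N%:R :> R by rewrite ltr0n expn_gt0.
rewrite expnS natrM ln_mult; [|exact/RltP|exact/RltP].
rewrite IH; apply: (@eq_trans _ _ (ln 2 + n%:R * ln 2)); first by [].
by rewrite -natr1 mulrDl mul1r addrC.
Qed.

Lemma ent_Wd e d : entropy (Pe e) (W d) = L%:R.
Proof.
rewrite (ent_unif _ (KI e d).1); last by rewrite card_mx card_Fp // expn_gt0.
rewrite card_mx card_Fp // mul1n log2E ln_2pow mulfK //.
by rewrite gt_eqF // ln2_gt0.
Qed.

Lemma rel_W e (dec : (forall i, Qt i) -> (forall i, At i) -> 'rV['F_2]_L)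
  (Hdec : forall w, 0 < P w -> dec (fun i => Q i w) (fun i => answer Q ans W i w) = W (theta w) w)
  w : Pe e w != 0 -> W e w = dec (fun i => QQ w i) (fun i => AA w i).
Proof.
case/Pe_supp/andP => hw /eqP he.
have -> : (fun i => QQ w i) = (fun i => Q i w).
  by apply: functional_extensionality_dep => i; rewrite ffunE.
have -> : (fun i => AA w i) = (fun i => answer Q ans W i w).
  by apply: functional_extensionality_dep => i; rewrite ffunE.
rewrite Hdec ?he //; by rewrite lt_neqAle eq_sym hw (P_ge0 HP).
Qed.

Definition ed (a b : 'I_N) : edgeK N := insubd e0 (if (a < b)%N then (a, b) else (b, a)).

Lemma ed_sym a b : ed a b = ed b a.
Proof.
rewrite /ed; case: (ltngtP a b) => [h|h|/val_inj ->] //.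
Qed.

Lemma ed_val a b : a != b -> sval (ed a b) = if (a < b)%N then (a, b) else (b, a).
Proof.
move=> hab; rewrite /ed insubdK //; case: ifP => //= h.
rewrite unfold_in /= ltn_neqAle leqNgt h andbT; apply/eqP => e; move/eqP: hab; apply.
by apply: val_inj; rewrite /= e.
Qed.

Lemma inc_ed a b k : a != b -> incident k (ed a b) = (k == a) || (k == b).
Proof.
move=> hab; rewrite /incident ed_val //; case: ifP => _ /=;
  by rewrite ![_ == k]eq_sym // orbC.
Qed.

Definition s i d := entropy P (fun w => (Ai i w, Zi i d w)) - entropy P (Zi i d).


Lemma files_eq k w w' : (forall x, incident k x -> W x w = W x w') -> files_on W k w = files_on W k w'.
Proof. by move=> h; apply/ffunP => x; rewrite !ffunE; apply: h; exact: (valP x). Qed.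

Lemma Zi_of i d w : Zi i d w =
  (fun y : {dffun forall k, Qt k} * {ffun edgeK N -> 'rV['F_2]_L} =>
     (y.1 i, [ffun x : server_files i => y.2 (sval x)])) (QQ w, Wz (pred1 d) w).
Proof. by rewrite /Zi /= ffunE; congr pair; apply/ffunP => x; rewrite !ffunE. Qed.

Lemma claim2 i j : i != j -> L%:R <= s i (ed i j) + s j (ed i j).
Proof.
move=> hij; set d := ed i j.
have HPd := Pe_prob d.
case: Hrel => dec Hdec.
pose Y w := (QQ w, Wz (pred1 d) w).
have ha : entropy (Pe d) (fun w => (W d w, Y w)) = entropy (Pe d) (W d) + entropy (Pe d) Y.
  exact: (ent_indep HPd (KI d d).2).
pose dec' (q : {dffun forall k, Qt k}) (a : {dffun forall k, At k}) :=
  dec (fun k => q k) (fun k => a k).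
have hb : entropy (Pe d) (fun w => (W d w, Y w)) <= entropy (Pe d) (fun w => (AA w, Y w)).
  apply: le_trans (ent_mono HPd (fun w => (W d w, Y w)) AA) _.
  rewrite (@ent_eqf _ _ _ _ (fun w => ((W d w, Y w), AA w)) (fun w => (AA w, Y w))
    (fun p => ((dec' p.2.1 p.1, p.2), p.1)) (fun q => (q.2, q.1.2))) //.
  by move=> w hw /=; rewrite /dec' -(rel_W Hdec hw).
have hc : entropy (Pe d) (fun w => (AA w, Y w)) = entropy (Pe d) (fun w => (Ai i w, Ai j w, Y w)).
  apply: ent_inv => w w' _ _; rewrite !xpair_eqE.
  case hq: (QQ w == QQ w'); case hz: (Wz (pred1 d) w == Wz (pred1 d) w');
    rewrite ?andbF ?andbT //=.
  apply/eqP/andP => [/ffunP hA|[/eqP hi /eqP hj]].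
    by split; apply/eqP; [have := hA i | have := hA j]; rewrite !ffunE.
  apply/ffunP => k; rewrite !ffunE.
  case: (eqVneq k i) => [->|hki]; first exact: hi.
  case: (eqVneq k j) => [->|hkj]; first exact: hj.
  move/eqP/ffunP: hq => hQ; move/eqP/ffunP: hz => hWz.
  rewrite /answer; congr ans; first by have := hQ k; rewrite !ffunE.
  apply: files_eq => x hx; have := hWz x; rewrite !ffunE /=.
  have -> : (x == d) = false.
    apply/negP => /eqP hxd; move: hx; rewrite hxd /d inc_ed //.
    by rewrite (negbTE hki) (negbTE hkj).
  by [].
have hd := ent_submod HPd (Ai i) (Ai j) Y.
have hei := cond_mono HPd (Ai i) (Y := Y) (Z := Zi i d) (Zi_of i d).
have hej := cond_mono HPd (Ai j) (Y := Y) (Z := Zi j d) (Zi_of j d).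
rewrite !PT_AZ !PT_Z in hei hej.
have hW := ent_Wd d d.
rewrite /s; lra.
Qed.


Lemma ed_neq a b c : a != b -> a != c -> b != c -> ed a b != ed a c.
Proof.
move=> hab hac hbc; apply/eqP => h; have := inc_ed b hab.
by rewrite h inc_ed // eqxx orbT (eq_sym b a) (negbTE hab) (negbTE hbc).
Qed.

Lemma arith1 (A0 Ab3 Tabc Q0 Tab Hc Ha Hb A1 YeW Ye WY0 Q1 We Lr Aab1 Aab1' Bf Y1f Ab1 Bg Qg Ca Cg Af Qf sfa sfz sga sgz : R) :
  A0 = Ab3 -> Ab3 <= Tabc + Q0 -> Tabc <= Tab + Hc -> Tab <= Ha + Hb ->
  A0 = A1 -> YeW - Ye <= WY0 - Q0 -> YeW = We + Ye -> WY0 = Q1 -> We = Lr ->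
  Aab1 <= A1 -> Aab1 = Aab1' -> Bf - Y1f <= Ab1 - Q1 -> Bf - Y1f = Bg - Qg ->
  Ca - Cg <= Aab1' - Ab1 -> Ca - Cg = Af - Qf -> sfa - sfz <= Af - Qf -> sga - sgz <= Bg - Qg ->
  Lr + (sfa - sfz) + (sga - sgz) <= Ha + Hb + Hc.
Proof. move=> *; lra. Qed.

Lemma claim1 a b c : a != b -> a != c -> b != c ->
  L%:R + s a (ed a c) + s b (ed b c) <= entropy P (Ai a) + entropy P (Ai b) + entropy P (Ai c).
Proof.
move=> hab hac hbc.
set e := ed a b; set f := ed a c; set g := ed b c.
have hef : e != f by exact: ed_neq.
have heg : e != g by rewrite /e ed_sym; apply: ed_neq => //; rewrite eq_sym.
have hfg : f != g by rewrite /f /g ed_sym [ed b c]ed_sym; apply: ed_neq => //; rewrite eq_sym.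
pose O := fun x : edgeK N => (x == e) || (x == f) || (x == g).
have hOk k : k != a -> k != b -> k != c -> forall x, incident k x -> O x = false.
  move=> ka kb kc x hx; apply/negP; rewrite /O => /orP [/orP [] |] /eqP hx'; move: hx; rewrite hx' inc_ed //.
  - by rewrite (negbTE ka) (negbTE kb).
  - by rewrite (negbTE ka) (negbTE kc).
  - by rewrite (negbTE kb) (negbTE kc).
have HPe := Pe_prob e.
case: Hrel => dec Hdec.
pose dec' (q : {dffun forall k, Qt k}) (al : {dffun forall k, At k}) :=
  dec (fun k => q k) (fun k => al k).
pose Y0 w := (QQ w, Wz O w).
pose Y1 w := (Y0 w, W e w).
pose Yf w := (QQ w, Wz (pred1 f) w).
pose Yg w := (QQ w, Wz (pred1 g) w).
have h1 : entropy (Pe e) (fun w => (AA w, Y0 w)) =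
          entropy (Pe e) (fun w => (Ai a w, Ai b w, Ai c w, Y0 w)).
  apply: ent_inv => w w' _ _; rewrite !xpair_eqE.
  case hq: (QQ w == QQ w'); case hz: (Wz O w == Wz O w');
    rewrite ?andbF ?andbT //=.
  apply/eqP/andP => [/ffunP hA|[/andP [/eqP ha /eqP hb] /eqP hc]].
    by split; [apply/andP; split|]; apply/eqP; [have := hA a | have := hA b | have := hA c];
      rewrite !ffunE.
  apply/ffunP => k; rewrite !ffunE.
  case: (eqVneq k a) => [->|hka]; first exact: ha.
  case: (eqVneq k b) => [->|hkb]; first exact: hb.
  case: (eqVneq k c) => [->|hkc]; first exact: hc.
  move/eqP/ffunP: hq => hQ; move/eqP/ffunP: hz => hWz.
  rewrite /answer; congr ans; first by have := hQ k; rewrite !ffunE.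
  apply: files_eq => x hx; have := hWz x; rewrite !ffunE /=.
  by rewrite (hOk k hka hkb hkc x hx).
have h1a := ent_subadd HPe (fun w => (Ai a w, Ai b w, Ai c w)) Y0.
have h1b := ent_subadd HPe (fun w => (Ai a w, Ai b w)) (Ai c).
have h1c := ent_subadd HPe (Ai a) (Ai b).
rewrite !PT_A in h1b h1c.
have h2 : entropy (Pe e) (fun w => (AA w, Y0 w)) = entropy (Pe e) (fun w => (AA w, Y1 w)).
  apply: (@ent_eqf _ _ _ _ _ _ (fun p => (p.1, p.2.1)) (fun p => (p.1, (p.2, dec' p.2.1 p.1)))) => //.
  by move=> w hw /=; rewrite /Y1 /dec' -(rel_W Hdec hw).
have h2a := cond_mono HPe (W e) (Y := fun w => (QQ w, Wz (pred1 e) w)) (Z := Y0)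
  (g := fun y => (y.1, [ffun x => if O x then 0 else y.2 x])).
have h2b := ent_indep HPe (KI e e).2.
have h2c : entropy (Pe e) (fun w => (W e w, Y0 w)) = entropy (Pe e) Y1.
  by apply: (@ent_eqf _ _ _ _ _ _ (fun p => (p.2, p.1)) (fun p => (p.2, p.1))).
have hWe := ent_Wd e e.
have h2a' : entropy (Pe e) (fun w => (W e w, (QQ w, Wz (pred1 e) w))) -
    entropy (Pe e) (fun w => (QQ w, Wz (pred1 e) w)) <=
    entropy (Pe e) (fun w => (W e w, Y0 w)) - entropy (Pe e) Y0.
  apply: h2a => w; rewrite /Y0 /=; congr pair; apply/ffunP => x; rewrite !ffunE /=.
  by case hO: (O x) => //; rewrite (_ : (x == e) = false) //; apply/negP => /eqP hx;
    move: hO; rewrite /O hx eqxx.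
have h3a : entropy (Pe e) (fun w => (Ai a w, Ai b w, Y1 w)) <= entropy (Pe e) (fun w => (AA w, Y1 w)).
  apply: le_trans (ent_mono HPe (fun w => (Ai a w, Ai b w, Y1 w)) AA) _.
  rewrite (@ent_eqf _ _ _ _ (fun w => ((Ai a w, Ai b w, Y1 w), AA w)) (fun w => (AA w, Y1 w))
    (fun p => ((p.1 a, p.1 b, p.2), p.1)) (fun q => (q.2, q.1.2))) //.
  by move=> w _ /=; rewrite !ffunE.
have h3r : entropy (Pe e) (fun w => (Ai a w, Ai b w, Y1 w)) =
           entropy (Pe e) (fun w => (Ai a w, (Ai b w, Y1 w))).
  by apply: (@ent_eqf _ _ _ _ _ _ (fun p => (p.1, p.2.1, p.2.2)) (fun p => (p.1.1, (p.1.2, p.2)))).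
have h3b1 := cond_mono HPe (Ai b) (Y := fun w => (Y1 w, W f w)) (Z := Y1) (g := fst) (fun w => erefl).
have h3c1 := cond_mono HPe (Ai a) (Y := fun w => ((Ai b w, Y1 w), W g w))
  (Z := fun w => (Ai b w, Y1 w)) (g := fst) (fun w => erefl).
have Oe x : O x = false -> (x == e) = false by rewrite /O; case: (x == e).
have Of x : O x = false -> (x == f) = false by rewrite /O; case: (x == f); rewrite ?orbT.
have Og x : O x = false -> (x == g) = false by rewrite /O; case: (x == g); rewrite ?orbT.
have h3b2 : entropy (Pe e) (fun w => (Ai b w, (Y1 w, W f w))) - entropy (Pe e) (fun w => (Y1 w, W f w))
  = entropy (Pe e) (fun w => (Ai b w, Yg w)) - entropy (Pe e) Yg.
  apply: (cond_eqf (Pe e) (Ai b) (Y := fun w => (Y1 w, W f w)) (Y' := Yg)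
    (f := fun p => (p.1.1.1, [ffun x => if x == g then 0 else if x == e then p.1.2
                   else if x == f then p.2 else p.1.1.2 x]))
    (g := fun y => (y.1, [ffun x => if O x then 0 else y.2 x], y.2 e, y.2 f))) => w.
    rewrite /Yg /Y1 /Y0 /=; congr pair; apply/ffunP => x; rewrite !ffunE /=.
    case: (eqVneq x g) => // hxg; case: (eqVneq x e) => [->//|hxe].
    case: (eqVneq x f) => [->//|hxf].
    by rewrite /O (negbTE hxe) (negbTE hxf) (negbTE hxg).
  rewrite /Yg /Y1 /Y0 /= !ffunE /= (negbTE heg) (negbTE hfg); congr (_, _, _, _).
  apply/ffunP => x; rewrite !ffunE /=; case hO: (O x) => //.
  by rewrite (Og x hO).
have h3c2 : entropy (Pe e) (fun w => (Ai a w, ((Ai b w, Y1 w), W g w))) -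
    entropy (Pe e) (fun w => ((Ai b w, Y1 w), W g w))
  = entropy (Pe e) (fun w => (Ai a w, Yf w)) - entropy (Pe e) Yf.
  apply: (cond_eqf (Pe e) (Ai a) (Y := fun w => ((Ai b w, Y1 w), W g w)) (Y' := Yf)
    (f := fun p => (p.1.2.1.1, [ffun x => if x == f then 0 else if x == e then p.1.2.2
                   else if x == g then p.2 else p.1.2.1.2 x]))
    (g := fun y => ((ans (y.1 b) [ffun x : server_files b => y.2 (sval x)],
                   (y.1, [ffun x => if O x then 0 else y.2 x], y.2 e)), y.2 g))) => w.
    rewrite /Yf /Y1 /Y0 /=; congr pair; apply/ffunP => x; rewrite !ffunE /=.
    case: (eqVneq x f) => // hxf; case: (eqVneq x e) => [->//|hxe].
    case: (eqVneq x g) => [->//|hxg].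
    by rewrite /O (negbTE hxe) (negbTE hxf) (negbTE hxg).
  rewrite /Yf /Y1 /Y0 /= !ffunE /= (negbTE hef) eq_sym (negbTE hfg).
  congr (_, (_, _, _), _).
    rewrite /Ai /answer; congr ans.
    apply/ffunP => x; rewrite !ffunE /=.
    have hx := valP x; rewrite (_ : (sval x == f) = false) //.
    apply/negP => /eqP hxf; move: hx; change (incident b (sval x) -> False); rewrite hxf /f inc_ed //.
    by rewrite (eq_sym b a) (negbTE hab) (negbTE hbc).
  apply/ffunP => x; rewrite !ffunE /=; case hO: (O x) => //.
  by rewrite (Of x hO).
have h3d := markov HPe (A := Ai a) (U := W f) (Y := Yf) (Z := Zi a f)
  (phi := fun z u => ans z.1 [ffun x : server_files a => if sval x == f then u else z.2 x])
  (Zi_of a f) _ (KI e f).2.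
have h3e := markov HPe (A := Ai b) (U := W g) (Y := Yg) (Z := Zi b g)
  (phi := fun z u => ans z.1 [ffun x : server_files b => if sval x == g then u else z.2 x])
  (Zi_of b g) _ (KI e g).2.
have h3d' : entropy (Pe e) (fun w => (Ai a w, Zi a f w)) - entropy (Pe e) (Zi a f) <=
    entropy (Pe e) (fun w => (Ai a w, Yf w)) - entropy (Pe e) Yf.
  apply: h3d => w; rewrite /Ai /answer /Zi /=; congr ans; apply/ffunP => x; rewrite !ffunE.
  by case: (eqVneq (sval x) f) => [->|hx]; rewrite ?eqxx ?(negbTE hx).
have h3e' : entropy (Pe e) (fun w => (Ai b w, Zi b g w)) - entropy (Pe e) (Zi b g) <=
    entropy (Pe e) (fun w => (Ai b w, Yg w)) - entropy (Pe e) Yg.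
  apply: h3e => w; rewrite /Ai /answer /Zi /=; congr ans; apply/ffunP => x; rewrite !ffunE.
  by case: (eqVneq (sval x) g) => [->|hx]; rewrite ?eqxx ?(negbTE hx).
rewrite !PT_AZ !PT_Z in h3d' h3e'.
clear h3d h3e.
idtac.
rewrite /s.
exact: (arith1 h1 h1a h1b h1c h2 h2a' h2b h2c hWe h3a h3r h3b1 h3b2 h3c1 h3c2 h3d' h3e').
Qed.


Lemma arith2 (Lr sab_a sab_b sac_a sac_c sbc_b sbc_c Ha Hb Hc : R) :
  Lr + sac_a + sbc_b <= Ha + Hb + Hc -> Lr + sab_a + sbc_c <= Ha + Hc + Hb ->
  Lr + sab_b + sac_c <= Hb + Hc + Ha ->
  Lr <= sab_a + sab_b -> Lr <= sac_a + sac_c -> Lr <= sbc_b + sbc_c ->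
  2 * Lr <= Ha + Hb + Hc.
Proof. move=> *; lra. Qed.

Lemma triangle a b c : a != b -> a != c -> b != c ->
  2 * L%:R <= entropy P (Ai a) + entropy P (Ai b) + entropy P (Ai c).
Proof.
move=> hab hac hbc.
have c1 := claim1 hab hac hbc.
have hcb : c != b by rewrite eq_sym.
have hba : b != a by rewrite eq_sym.
have hca : c != a by rewrite eq_sym.
have c2 := claim1 hac hab hcb.
have c3 := claim1 hbc hba hca.
have d1 := claim2 hab.
have d2 := claim2 hac.
have d3 := claim2 hbc.
rewrite [ed c b]ed_sym in c2.
rewrite [ed b a]ed_sym [ed c a]ed_sym in c3.
exact: (arith2 c1 c2 c3 d1 d2 d3).
Qed.

Lemma valS (k : 'I_N) : val (ordS k) = if (k.+1 < N)%N then k.+1 else 0%N.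
Proof.
rewrite /=; case: ifP => h; first by rewrite modn_small.
have -> : k.+1 = N by apply/eqP; rewrite eqn_leq ltn_ord leqNgt h.
by rewrite modnn.
Qed.

Lemma ordS_neq (k : 'I_N) : k != ordS k.
Proof.
apply/eqP => /(congr1 (@nat_of_ord N)); rewrite valS; have hk := ltn_ord k; have h3 := HN.
by case: ifP => h /= e; lia.
Qed.

Lemma ordSS_neq (k : 'I_N) : k != ordS (ordS k).
Proof.
apply/eqP => /(congr1 (@nat_of_ord N)); rewrite valS; have hk := ltn_ord k; have h3 := HN.
have hv : nat_of_ord (ordS k) = if (k.+1 < N)%N then k.+1 else 0%N := valS k.
by case: ifP => h; move: hv; case: ifP => h' hv e; lia.
Qed.


Lemma main_bound : 2 * L%:R * N%:R <= 3 * \sum_(i < N) entropy P (Ai i).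
Proof.
pose H i := entropy P (Ai i).
have hs : \sum_(k < N) (H k + H (ordS k) + H (ordS (ordS k))) = 3 * \sum_(i < N) H i.
  rewrite !big_split /=.
  have r1 : \sum_(k < N) H (ordS k) = \sum_(k < N) H k.
    by rewrite [RHS](reindex_inj (@ordS_inj N)).
  have r2 : \sum_(k < N) H (ordS (ordS k)) = \sum_(k < N) H k.
    by rewrite [RHS](reindex_inj (@ordS_inj N)) [RHS](reindex_inj (@ordS_inj N)).
  rewrite r1 r2; lra.
have hl : \sum_(k < N) (2 * L%:R) <= \sum_(k < N) (H k + H (ordS k) + H (ordS (ordS k))).
  apply: ler_sum => k _; apply: triangle; [exact: ordS_neq | exact: ordSS_neq | exact: ordS_neq].
rewrite sumr_const card_ord hs in hl.
by rewrite [_ * N%:R]mulr_natr.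
Qed.

Lemma rate_bound : PIR_rate P Q ans W <= 2 / (N.+1)%:R.
Proof.
rewrite /PIR_rate RdivE; set D := \sum_(i < N) entropy P (answer Q ans W i).
have hB : 2 * L%:R * N%:R <= 3 * D := main_bound.
have hD0 : 0 <= D by apply: sumr_ge0 => i _; apply: (ent_ge0 HP).
case: (eqVneq D 0) => [->|hD]; first by rewrite invr0 mulr0 divr_ge0 // ler0n.
have hDp : 0 < D by rewrite lt_neqAle eq_sym hD hD0.
rewrite ler_pdivrMr // mulrAC ler_pdivlMr ?ltr0n //.
have hn : (3 * (L * N.+1) <= 2 * (2 * L * N))%N by nia.
have hr : 3 * (L%:R * N.+1%:R) <= 2 * (2 * L%:R * N%:R) :> R.
  by move: hn; rewrite -(ler_nat R) !natrM.
lra.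
Qed.

End Model.

Unset Implicit Arguments.

Theorem corollary2 (N L : nat) (Omega : finType) (P : Omega -> R)
  (theta : Omega -> edgeK N)
  (Qt : 'I_N -> finType) (Q : forall i, Omega -> Qt i)
  (At : 'I_N -> finType)
  (ans : forall i, Qt i -> {ffun server_files i -> 'rV['F_2]_L} -> At i)
  (W : edgeK N -> Omega -> 'rV['F_2]_L) :
  (3 <= N)%N ->
  KN_PIR_scheme P theta Q ans W ->
  PIR_rate P Q ans W <= 2 / (N.+1)%:R.
Proof. move=> h3 hs; exact: (rate_bound h3 hs). Qed.
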